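(* Let $I\in\mathcal S$ be written as $I=I(y)=\sum_k a_k(c)y^k$ with $a_k\in\mathbb C[c]$. Then for every $n\ge0$, $$\langle I,e_n\rangle=I(u_n)\,e_n(c),\qquad u_n=c-\frac{n(n+1)}2,$$ where $I(u_n)=\sum_ka_k(c)u_n^k$ and $e_n(c)$ is $e_n(y)$ with $y$ replaced by $c$.
   Context: Chord diagrams and $w_{\mathfrak{sl}_2}(D)=\sum_\varphi x_{\varphi(p_1)}\cdots x_{\varphi(p_{2n})}\in\mathbb C[c]$ ($x_1,x_2,x_3$ the basis $\tfrac12\begin{pmatrix}0&1\\1&0\end{pmatrix},\tfrac12\begin{pmatrix}0&-i\\ i&0\end{pmatrix},\tfrac12\begin{pmatrix}1&0\\0&-1\end{pmatrix}$ of $\mathfrak{sl}_2$, $c=\sum x_i^2$, endpoints read in order from a cut point, $\varphi$ over maps chords$\to\{1,2,3\}$). A share: two oriented intervals (strand 1, strand 2) with finitely many chords, up to orientation-preserving diffeomorphisms of each strand. Join $(I,H)$: chord diagram whose circle reads strand 1 of $I$, strand 1 of $H$, strand 2 of $I$, strand 2 of $H$. $\mathcal S$: quotient of the $\mathbb C$-span of shares by $I\sim I'$ iff $w_{\mathfrak{sl}_2}((I,H))=w_{\mathfrak{sl}_2}((I',H))$ for all shares $H$. Cross product $I\times H$: strand 1 = strand 1 of $I$ then strand 1 of $H$; strand 2 = strand 2 of $H$ then strand 2 of $I$; it gives $\mathcal S\cong\mathbb C[c][y]$ ($c$ = class of a one-arch share, $y$ = class of the one-bridge share). $\langle I,H\rangle=w_{\mathfrak{sl}_2}((I,H))$.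 $U$: operator on $\mathcal S$ adding an arch on strand 1 whose endpoints precede and follow all other endpoints on strand 1. $e_n\in\mathcal S$: the unique monic degree-$n$ polynomial in $y$ over $\mathbb C[c]$ with $Ue_n=u_ne_n$. *)

(* Defs.v *)
From mathcomp Require Import all_boot all_order all_algebra.
Set Implicit Arguments.
Unset Strict Implicit.
Unset Printing Implicit Defensive.
Import GRing.Theory Num.Theory.
Local Open Scope ring_scope.

(* The ground field C is an arbitrary numClosedFieldType
   (an algebraically closed field of characteristic 0 with 'i); this covers
   the complex numbers. *)

Section SL2Shares.
Variable C : numClosedFieldType.

(* Elements of the tensor (free) algebra on x_1,x_2,x_3 (indexed by 'I_3:
   index 0,1,2 stand for x_1,x_2,x_3) as formal finite sums of words. *)
Definition FA := seq (C * seq 'I_3).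

Definition fa_coef (F : FA) (w : seq 'I_3) : C := \sum_(t <- F | t.2 == w) t.1.
Definition fa_scale (k : C) (F : FA) : FA := [seq (k * t.1, t.2) | t <- F].
Definition fa_mul (F G : FA) : FA := [seq (a.1 * b.1, a.2 ++ b.2) | a <- F, b <- G].
Definition fa_one : FA := [:: (1, [::])].

(* Levi-Civita symbol: [x_a, x_b] = i * sum_d eps a b d x_d for the basis
   x_j = sigma_j / 2 (Pauli matrices). *)
Definition eps (a b d : 'I_3) : C :=
  let t := (nat_of_ord a, nat_of_ord b, nat_of_ord d) in
  if t \in [:: (0, 1, 2); (1, 2, 0); (2, 0, 1)]%N then 1
  else if t \in [:: (0, 2, 1); (2, 1, 0); (1, 0, 2)]%N then -1 else 0.

Definition lie_rel (a b : 'I_3) : FA :=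
  [:: (1, [:: a; b]); (-1, [:: b; a])] ++
  [seq (- ('i * eps a b d), [:: d]) | d <- enum 'I_3].

Definition ideal_gen (k : C) (u : seq 'I_3) (a b : 'I_3) (v : seq 'I_3) : FA :=
  fa_scale k (fa_mul [:: (1, u)] (fa_mul (lie_rel a b) [:: (1, v)])).

Definition in_ideal (F : FA) : Prop :=
  exists R : seq (C * seq 'I_3 * 'I_3 * 'I_3 * seq 'I_3),
    forall w, fa_coef F w =
      fa_coef (flatten [seq (let: (k, u, a, b, v) := r in ideal_gen k u a b v)
                         | r <- R]) w.

Definition eqU (F G : FA) : Prop := in_ideal (F ++ fa_scale (-1) G).

Definition casimir : FA := [seq (1, [:: a; a]) | a <- enum 'I_3].
Definition fa_poly (p : {poly C}) : FA :=
  flatten [seq fa_scale p`_j (iter j (fa_mul casimir) fa_one) | j <- iota 0 (size p)].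

(* A chord diagram cut at a point is a word of chord labels (each chord
   label occurring twice); w_sl2 = sum over maps phi : chords -> {1,2,3}
   of x_{phi(p_1)} ... x_{phi(p_2n)}. *)
Definition wt_word (s : seq nat) : FA :=
  let L := undup s in
  [seq (1, [seq nth ord0 f (index t L) | t <- s]) | f : (size L).-tuple 'I_3].

(* a share: (word read along strand 1, word read along strand 2), letters
   are chord labels; well-formed if each chord has exactly two endpoints *)
Definition share := (seq nat * seq nat)%type.
Definition wf_share (I : share) : bool :=
  all (fun t => count_mem t (I.1 ++ I.2) == 2%N) (I.1 ++ I.2).

(* disjoint relabellings *)
Definition tagL (n : nat) : nat := n.*2.
Definition tagR (n : nat) : nat := n.*2.+1.

(* the join (I,H): circle reads I.1, H.1, I.2, H.2 *)
Definition joinw (I H : share) : seq nat :=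
  map tagL I.1 ++ map tagR H.1 ++ map tagL I.2 ++ map tagR H.2.

Definition cross (I H : share) : share :=
  (map tagL I.1 ++ map tagR H.1, map tagR H.2 ++ map tagL I.2).

(* U: arch on strand 1 enclosing all other endpoints of strand 1 *)
Definition Ushare (I : share) : share :=
  (0%N :: map tagR I.1 ++ [:: 0%N], map tagR I.2).

Definition arch : share := ([:: 0; 0]%N, [::]).
Definition bridge : share := ([:: 0]%N, [:: 0]%N).
Definition empty_share : share := ([::], [::]).

Definition Comb := seq (C * share).

Definition crossC (F G : Comb) : Comb :=
  [seq (a.1 * b.1, cross a.2 b.2) | a <- F, b <- G].
Definition Uop (F : Comb) : Comb := [seq (a.1, Ushare a.2) | a <- F].
Definition powS (s : share) (k : nat) : Comb :=
  iter k (fun F => crossC F [:: (1, s)]) [:: (1, empty_share)].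

Definition pair_w (F G : Comb) : FA :=
  flatten [seq fa_scale (a.1 * b.1) (wt_word (joinw a.2 b.2)) | a <- F, b <- G].

(* equality in S: same pairing with every share H *)
Definition equivS (F G : Comb) : Prop :=
  forall H : share, wf_share H ->
    eqU (pair_w F [:: (1, H)]) (pair_w G [:: (1, H)]).

(* the element A(y) = sum_k a_k(c) y^k of S (c = class of arch,
   y = class of bridge, product = cross product) *)
Definition repS (A : {poly {poly C}}) : Comb :=
  flatten [seq flatten [seq [seq (A`_k`_j * t.1, t.2)
                              | t <- crossC (powS arch j) (powS bridge k)]
                        | j <- iota 0 (size A`_k)]
          | k <- iota 0 (size A)].

Definition u_ev (n : nat) : {poly C} := 'X - ((n * n.+1)%:R / 2)%:P.

Definition is_e (n : nat) (E : {poly {poly C}}) : Prop :=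
  [/\ E \is monic, size E = n.+1 &
      equivS (Uop (repS E)) (repS ((u_ev n)%:P * E))].
End SL2Shares.

(* Main.v *)
Require Import Defs.
From mathcomp Require Import all_boot all_order all_algebra zify.
Set Implicit Arguments.
Unset Strict Implicit.
Unset Printing Implicit Defensive.
Import GRing.Theory Num.Theory.
Local Open Scope ring_scope.

Section Dev.
Variable C : numClosedFieldType.

Local Notation FA := (FA C).
Definition word := seq 'I_3.
Definition fn := word -> C.

Definition delta (z : word) : fn := fun w => (z == w)%:R.

Lemma fa_coefE (F : FA) w : fa_coef F w = \sum_(t <- F) t.1 * delta t.2 w.
Proof.
rewrite /fa_coef big_mkcond /=; apply: eq_bigr => t _.
by rewrite /delta; case: eqP => _; rewrite ?mulr1 ?mulr0.
Qed.

Lemma fa_coef_cat (F G : FA) w : fa_coef (F ++ G) w = fa_coef F w + fa_coef G w.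
Proof. by rewrite /fa_coef big_cat. Qed.

Lemma fa_coef_nil w : fa_coef ([::] : FA) w = 0.
Proof. by rewrite /fa_coef big_nil. Qed.

Lemma fa_coef_flatten (I : Type) (s : seq I) (h : I -> FA) w :
  fa_coef (flatten [seq h i | i <- s]) w = \sum_(i <- s) fa_coef (h i) w.
Proof.
elim: s => [|i s IH] /=; first by rewrite fa_coef_nil big_nil.
by rewrite fa_coef_cat IH big_cons.
Qed.

Lemma fa_coef_scale k (F : FA) w : fa_coef (fa_scale k F) w = k * fa_coef F w.
Proof.
rewrite !fa_coefE /fa_scale big_map mulr_sumr; apply: eq_bigr => t _ /=.
by rewrite mulrA.
Qed.

Lemma fa_coef_mul (F G : FA) w :
  fa_coef (fa_mul F G) w = \sum_(a <- F) \sum_(b <- G) a.1 * b.1 * delta (a.2 ++ b.2) w.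
Proof. by rewrite fa_coefE /fa_mul big_allpairs_dep. Qed.

(* left multiplication by a word *)
Definition lw (u : word) (g : fn) : fn :=
  fun w => if take (size u) w == u then g (drop (size u) w) else 0.

Lemma lw_delta u z w : lw u (delta z) w = delta (u ++ z) w.
Proof.
rewrite /lw /delta.
case: eqP => [Ht|Ht].
  have -> : (u ++ z == w) = (u ++ z == take (size u) w ++ drop (size u) w) by rewrite cat_take_drop.
  by rewrite Ht eqseq_cat // eqxx.
case: eqP => // Hw; case: Ht; by rewrite -Hw take_size_cat.
Qed.

Lemma lw_sum (I : Type) (s : seq I) (P : pred I) (F : I -> fn) u w :
  lw u (fun w => \sum_(i <- s | P i) F i w) w = \sum_(i <- s | P i) lw u (F i) w.
Proof.
rewrite /lw; case: ifP => // _; by rewrite big1.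
Qed.

Lemma lw_scale u k (g : fn) w : lw u (fun w => k * g w) w = k * lw u g w.
Proof. by rewrite /lw; case: ifP => //; rewrite mulr0. Qed.

Lemma lw_add u (g h : fn) w : lw u (fun w => g w + h w) w = lw u g w + lw u h w.
Proof. by rewrite /lw; case: ifP => //; rewrite addr0. Qed.

Lemma lw_ext u (g h : fn) : g =1 h -> lw u g =1 lw u h.
Proof. by move=> E w; rewrite /lw E. Qed.



Lemma fa_coef_lmul (u : word) (F : FA) w :
  fa_coef (fa_mul [:: (1, u)] F) w = lw u (fa_coef F) w.
Proof.
rewrite fa_coef_mul big_seq1 (lw_ext u (fa_coefE F)) lw_sum; apply: eq_bigr => b _ /=.
by rewrite lw_scale lw_delta mul1r.
Qed.


Lemma lw_sub u (g h : fn) w : lw u (fun w => g w - h w) w = lw u g w - lw u h w.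
Proof. by rewrite /lw; case: ifP => //; rewrite subr0. Qed.

Lemma lw0 u w : lw u (fun _ => 0) w = 0.
Proof. by rewrite /lw; case: ifP. Qed.

Definition gensF (R : seq (C * seq 'I_3 * 'I_3 * 'I_3 * seq 'I_3)) : FA :=
  flatten [seq (let: (k, u, a, b, v) := r in ideal_gen k u a b v) | r <- R].

Definition inI (g : fn) := exists R, forall w, g w = fa_coef (gensF R) w.

Lemma in_idealE (F : FA) : in_ideal F <-> inI (fa_coef F).
Proof. by []. Qed.

Definition ie (a b d : 'I_3) : C := 'i * eps C a b d.

Definition genf k u a b v : fn := fun w =>
  k * (delta (u ++ a :: b :: v) w - delta (u ++ b :: a :: v) w -
       \sum_(d <- enum 'I_3) ie a b d * delta (u ++ d :: v) w).

Lemma fa_coef_gen k u a b v w : fa_coef (ideal_gen k u a b v) w = genf k u a b v w.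
Proof.
rewrite /ideal_gen fa_coef_scale fa_coef_lmul /genf; congr (_ * _).
have E : forall w', fa_coef (fa_mul (lie_rel C a b) [:: (1, v)]) w' =
   delta (a :: b :: v) w' - delta (b :: a :: v) w' -
       \sum_(d <- enum 'I_3) ie a b d * delta (d :: v) w'.
  move=> w'; rewrite fa_coef_mul /lie_rel /= !big_cons big_map /=.
  rewrite !big_nil !addr0 !mulr1 mul1r addrA; congr (_ + _); first by rewrite mulN1r.
  rewrite -sumrN; apply: eq_bigr => d _; by rewrite big_seq1 mulr1 mulNr.
rewrite (lw_ext u E) !lw_sub lw_sum !lw_delta; congr (_ - _ - _).
by apply: eq_bigr => d _; rewrite lw_scale lw_delta.
Qed.

Lemma fa_coef_gensF R w :
  fa_coef (gensF R) w = \sum_(r <- R) (let: (k, u, a, b, v) := r in genf k u a b v w).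
Proof.
rewrite /gensF fa_coef_flatten; apply: eq_bigr => [[[[[k u] a] b] v]] _.
exact: fa_coef_gen.
Qed.

Lemma inI_ext (g h : fn) : g =1 h -> inI g -> inI h.
Proof. by move=> E [R HR]; exists R => w; rewrite -E. Qed.

Lemma inI0 : inI (fun _ => 0).
Proof. by exists [::] => w; rewrite /gensF /= fa_coef_nil. Qed.

Lemma inI_add g h : inI g -> inI h -> inI (fun w => g w + h w).
Proof.
move=> [R1 H1] [R2 H2]; exists (R1 ++ R2) => w.
by rewrite /gensF map_cat flatten_cat fa_coef_cat H1 H2.
Qed.

Lemma inI_scale k g : inI g -> inI (fun w => k * g w).
Proof.
move=> [R H]; exists [seq (let: (k', u, a, b, v) := r in (k * k', u, a, b, v)) | r <- R] => w.
rewrite H !fa_coef_gensF big_map mulr_sumr; apply: eq_bigr => [[[[[k' u] a] b] v]] _.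
by rewrite /genf mulrA.
Qed.

Lemma inI_lw u g : inI g -> inI (lw u g).
Proof.
move=> [R H]; exists [seq (let: (k', u', a, b, v) := r in (k', u ++ u', a, b, v)) | r <- R] => w.
rewrite (lw_ext u H) (lw_ext u (fa_coef_gensF R)) lw_sum fa_coef_gensF big_map.
apply: eq_bigr => [[[[[k' u'] a] b] v]] _ /=.
rewrite /genf lw_scale !lw_sub lw_sum !lw_delta !catA; congr (_ * (_ - _ - _)).
by apply: eq_bigr => d _; rewrite lw_scale lw_delta catA.
Qed.

Lemma inI_sum (I : Type) (s : seq I) (F : I -> fn) :
  (forall i, inI (F i)) -> inI (fun w => \sum_(i <- s) F i w).
Proof.
move=> H; elim: s => [|i s IH].
  by apply: inI_ext inI0 => w; rewrite big_nil.
by apply: inI_ext (inI_add (H i) IH) => w; rewrite big_cons.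
Qed.

Definition equ (g h : fn) := inI (fun w => g w - h w).

Lemma equ_ext g h : g =1 h -> equ g h.
Proof. by move=> E; apply: inI_ext inI0 => w; rewrite E subrr. Qed.

Lemma equ_refl g : equ g g.
Proof. exact: equ_ext. Qed.

Lemma equ_sym g h : equ g h -> equ h g.
Proof.
move=> H; apply: inI_ext (inI_scale (-1) H) => w.
by rewrite mulN1r opprB.
Qed.

Lemma equ_trans g h k : equ g h -> equ h k -> equ g k.
Proof.
move=> H1 H2; apply: inI_ext (inI_add H1 H2) => w.
by rewrite addrA subrK.
Qed.

Lemma equ_add g1 h1 g2 h2 : equ g1 h1 -> equ g2 h2 ->
  equ (fun w => g1 w + g2 w) (fun w => h1 w + h2 w).
Proof.
move=> H1 H2; apply: inI_ext (inI_add H1 H2) => w.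
by rewrite opprD addrACA.
Qed.

Lemma equ_scale k g h : equ g h -> equ (fun w => k * g w) (fun w => k * h w).
Proof. by move=> H; apply: inI_ext (inI_scale k H) => w; rewrite mulrBr. Qed.

Lemma equ_lw u g h : equ g h -> equ (lw u g) (lw u h).
Proof. by move=> H; apply: inI_ext (inI_lw u H) => w; rewrite lw_sub. Qed.

Lemma equ_sum (I : Type) (s : seq I) (F G : I -> fn) :
  (forall i, equ (F i) (G i)) ->
  equ (fun w => \sum_(i <- s) F i w) (fun w => \sum_(i <- s) G i w).
Proof.
move=> H; apply: inI_ext (inI_sum s H) => w.
by rewrite sumrB.
Qed.

Lemma equ_sum_in (I : eqType) (s : seq I) (F G : I -> fn) :
  (forall i, i \in s -> equ (F i) (G i)) ->
  equ (fun w => \sum_(i <- s) F i w) (fun w => \sum_(i <- s) G i w).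
Proof.
move=> H; elim: s H => [|i s IH] H.
  by apply: equ_ext => w; rewrite !big_nil.
have H1 := H i (mem_head _ _).
have H2 : equ (fun w => \sum_(j <- s) F j w) (fun w => \sum_(j <- s) G j w).
  by apply: IH => j Hj; apply: H; rewrite inE Hj orbT.
apply: equ_trans (equ_trans (equ_add H1 H2) _).
- by apply: equ_ext => w; rewrite big_cons.
- by apply: equ_ext => w; rewrite big_cons.
Qed.

Lemma equ_extl g g' h : g =1 g' -> equ g' h -> equ g h.
Proof. by move=> E; apply: equ_trans (equ_ext E). Qed.

Lemma equ_extr g h h' : h =1 h' -> equ g h' -> equ g h.
Proof. by move=> E H; apply: equ_trans H (equ_ext _) => w; rewrite E. Qed.

Lemma eqU_equ (F G : FA) : equ (fa_coef F) (fa_coef G) -> eqU F G.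
Proof.
move=> H; rewrite /eqU; apply/in_idealE; apply: inI_ext H => w.
by rewrite fa_coef_cat fa_coef_scale mulN1r.
Qed.

Lemma equ_eqU (F G : FA) : eqU F G -> equ (fa_coef F) (fa_coef G).
Proof.
rewrite /eqU => /in_idealE H; apply: inI_ext H => w.
by rewrite fa_coef_cat fa_coef_scale mulN1r.
Qed.

Lemma equ_lie u a b v :
  equ (delta (u ++ a :: b :: v))
      (fun w => delta (u ++ b :: a :: v) w +
                \sum_(d <- enum 'I_3) ie a b d * delta (u ++ d :: v) w).
Proof.
have H : inI (genf 1 u a b v).
  exists [:: (1, u, a, b, v)] => w; by rewrite fa_coef_gensF big_seq1.
apply: inI_ext H => w; rewrite /genf mul1r; by rewrite opprD addrA.
Qed.


Definition cL (g : fn) : fn := fun w => \sum_(a <- enum 'I_3) lw [:: a; a] g w.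

Lemma cL_ext g h : g =1 h -> cL g =1 cL h.
Proof. by move=> E w; apply: eq_bigr => a _; rewrite (lw_ext _ E). Qed.

Lemma cL_sum (I : Type) (s : seq I) (F : I -> fn) w :
  cL (fun w => \sum_(i <- s) F i w) w = \sum_(i <- s) cL (F i) w.
Proof.
rewrite /cL (eq_bigr _ (fun a _ => lw_sum _ _ _ _ _)) /=.
exact: exchange_big.
Qed.

Lemma cL_scale k g w : cL (fun w => k * g w) w = k * cL g w.
Proof. by rewrite /cL mulr_sumr; apply: eq_bigr => a _; rewrite lw_scale. Qed.

Lemma cL_add g h w : cL (fun w => g w + h w) w = cL g w + cL h w.
Proof. by rewrite /cL -big_split; apply: eq_bigr => a _; rewrite lw_add. Qed.

Lemma cL_sub g h w : cL (fun w => g w - h w) w = cL g w - cL h w.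
Proof. by rewrite /cL -sumrB; apply: eq_bigr => a _; rewrite lw_sub. Qed.

Lemma equ_cL g h : equ g h -> equ (cL g) (cL h).
Proof. by move=> H; apply: equ_sum => a; apply: equ_lw. Qed.

Lemma fa_coef_cas (F : FA) w : fa_coef (fa_mul (casimir C) F) w = cL (fa_coef F) w.
Proof.
rewrite fa_coef_mul /casimir big_map /cL; apply: eq_bigr => a _.
rewrite (lw_ext _ (fa_coefE F)) lw_sum; apply: eq_bigr => b _ /=.
by rewrite mul1r lw_scale lw_delta.
Qed.

Definition cLpow j g := iter j cL g.

Lemma cLpow_ext j g h : g =1 h -> cLpow j g =1 cLpow j h.
Proof. elim: j => [|j IH] E //=; apply: cL_ext; exact: IH. Qed.

Lemma equ_cLpow j g h : equ g h -> equ (cLpow j g) (cLpow j h).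
Proof. elim: j => [|j IH] E //=; apply: equ_cL; exact: IH. Qed.

Lemma cLpow_sum j (I : Type) (s : seq I) (F : I -> fn) w :
  cLpow j (fun w => \sum_(i <- s) F i w) w = \sum_(i <- s) cLpow j (F i) w.
Proof.
elim: j w => [|j IH] w //=.
by rewrite (cL_ext (IH)) cL_sum.
Qed.

Lemma cLpow_scale j k g w : cLpow j (fun w => k * g w) w = k * cLpow j g w.
Proof.
elim: j w => [|j IH] w //=.
by rewrite (cL_ext IH) cL_scale.
Qed.

Lemma cLpow_add j g h w : cLpow j (fun w => g w + h w) w = cLpow j g w + cLpow j h w.
Proof.
elim: j w => [|j IH] w //=.
by rewrite (cL_ext IH) cL_add.
Qed.

Lemma cLpow_sub j g h w : cLpow j (fun w => g w - h w) w = cLpow j g w - cLpow j h w.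
Proof.
elim: j w => [|j IH] w //=.
by rewrite (cL_ext IH) cL_sub.
Qed.

Lemma cLpowD i j g : cLpow (i + j) g =1 cLpow i (cLpow j g).
Proof. by move=> w; rewrite /cLpow iterD. Qed.

Definition cons_w (v : seq nat) (w : word) : bool :=
  w == [seq nth ord0 w (index t v) | t <- v].

Definition Wf (v : seq nat) : fn := fun w => (cons_w v w)%:R.

Definition col (L : seq nat) (f : seq 'I_3) (v : seq nat) : word :=
  [seq nth ord0 f (index t L) | t <- v].

Lemma cons_col L f v : {subset v <= L} -> cons_w v (col L f v).
Proof.
move=> HvL; apply/eqP; rewrite {1}/col; apply/eq_in_map => t Ht.
rewrite /col (nth_map 0%N) ?index_mem // nth_index //.
Qed.

Lemma WfE (L : seq nat) v : uniq L -> v =i L ->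
  Wf v =1 fun w => \sum_(f : (size L).-tuple 'I_3) delta (col L f v) w.
Proof.
move=> UL HvL w.
have sub : {subset v <= L} by move=> t; rewrite HvL.
rewrite /Wf /delta; case: (boolP (cons_w v w)) => Hc.
  pose f0 := [tuple nth ord0 w (index (nth 0%N L i) v) | i < size L].
  have Hf0 : col L f0 v = w.
    apply: (@etrans _ _ [seq nth ord0 w (index t v) | t <- v]); last by rewrite -(eqP Hc).
    apply/eq_in_map => t Ht.
    have Hk : (index t L < size L)%N by rewrite index_mem -HvL.
    rewrite -[nth ord0 f0 _]/(nth ord0 f0 (Ordinal Hk)) -tnth_nth tnth_mktuple /=.
    by rewrite nth_index // -HvL.
  rewrite (bigD1 f0) //= Hf0 eqxx big1 ?addr0 // => f Hf.
  case: eqP => // Hfw; case/eqP: Hf.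
  apply: eq_from_tnth => i; rewrite tnth_mktuple -Hfw /col.
  have Hi : (index (nth 0%N L i) v < size v)%N by rewrite index_mem HvL mem_nth.
  rewrite (nth_map 0%N) // nth_index ?HvL ?mem_nth // index_uniq //.
  by rewrite (tnth_nth ord0).
rewrite big1 // => f _; case: eqP => // Hfw.
by case/negP: Hc; rewrite -Hfw cons_col.
Qed.

Lemma fa_coef_wt v w : fa_coef (wt_word C v) w = Wf v w.
Proof.
rewrite fa_coefE /wt_word /= big_map big_enum /= (WfE (undup_uniq v)) ?mem_undup //.
  by apply: eq_bigr => f _; rewrite mul1r.
by move=> t; rewrite mem_undup.
Qed.


Lemma index_map_in (g : nat -> nat) (s : seq nat) t :
  {in t :: s &, injective g} -> index (g t) (map g s) = index t s.
Proof.
elim: s => [|y s IH] Hinj //=.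
have -> : (g y == g t) = (y == t).
  apply/eqP/eqP => [E|->] //; apply: Hinj => //; rewrite !inE eqxx ?orbT //.
case: eqP => // _; congr S; apply: IH => a b Ha Hb; apply: Hinj.
  by move: Ha; rewrite !inE; case/orP => ->; rewrite ?orbT.
by move: Hb; rewrite !inE; case/orP => ->; rewrite ?orbT.
Qed.

Lemma Wf_map (g : nat -> nat) v : {in v &, injective g} -> Wf (map g v) =1 Wf v.
Proof.
move=> Hinj w; rewrite /Wf /cons_w -map_comp; congr ((w == _)%:R).
apply/eq_in_map => t Ht /=; rewrite index_map_in //.
move=> a b; rewrite !inE => Ha Hb; apply: Hinj.
  by case/orP: Ha => [/eqP->|].
by case/orP: Hb => [/eqP->|].
Qed.

Fixpoint doubles (X : seq nat) : seq nat :=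
  if X is x :: X' then x :: x :: doubles X' else [::].

Lemma mem_doubles X t : (t \in doubles X) = (t \in X).
Proof. by elim: X => [|x X IH] //=; rewrite !inE IH orbA orbb. Qed.

Lemma map_doubles (g : nat -> nat) X : map g (doubles X) = doubles (map g X).
Proof. by elim: X => [|x X IH] //=; rewrite IH. Qed.

Lemma count_doubles X t : count_mem t (doubles X) = (count_mem t X).*2.
Proof. elim: X => [|x X IH] //=; rewrite IH; by case: (x == t). Qed.

Lemma sum_dd (b1 b2 : 'I_3) (X : C) :
  \sum_(a <- enum 'I_3) (if [:: b1; b2] == [:: a; a] then X else 0) = (b1 == b2)%:R * X.
Proof.
case: (eqVneq b1 b2) => [<-|Hne].
  rewrite (bigD1_seq b1) ?mem_enum ?enum_uniq //= eqxx mul1r big1_seq ?addr0 // => a /andP[Ha _].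
  by rewrite !eqseq_cons eq_sym (negbTE Ha).
rewrite mul0r big1 // => a _; case: eqP => // [[E1 E2]].
by case/eqP: Hne; rewrite E1 E2.
Qed.

Lemma Wf_dd z v : z \notin v -> Wf (z :: z :: v) =1 cL (Wf v).
Proof.
move=> Hz [|b1 [|b2 w']].
- rewrite /Wf /cons_w /cL big1 // => a _; by rewrite /lw.
- rewrite /Wf /cons_w /cL big1 /=; first by rewrite eqseq_cons andbF.
  by move=> a _; rewrite /lw /= eqseq_cons andbF.
rewrite /cL.
rewrite (eq_bigr (fun a => if [:: b1; b2] == [:: a; a] then Wf v w' else 0)); last first.
  by move=> a _; rewrite /lw /= take0 drop0.
rewrite sum_dd /Wf /cons_w /= eqxx !eqseq_cons eqxx /= eq_sym -natrM mulnb.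
congr ((_ && (w' == _))%:R).
apply/eq_in_map => t Ht /=.
have -> : (z == t) = false by apply/negbTE; apply: contra Hz => /eqP->.
by [].
Qed.

Lemma Wf_doubles X v : uniq X -> all (fun x => x \notin v) X ->
  Wf (doubles X ++ v) =1 cLpow (size X) (Wf v).
Proof.
elim: X => [|x X IH] //= /andP[HxX UX] /andP[Hxv HX] w.
rewrite Wf_dd; last by rewrite mem_cat mem_doubles negb_or HxX.
by apply: cL_ext => w'; apply: IH.
Qed.


Definition corr (a : 'I_3) (z : word) : fn := fun w =>
  \sum_(0 <= p < size z) \sum_(d <- enum 'I_3) ie a (nth ord0 z p) d * delta (set_nth ord0 z p d) w.

Lemma comm_gen (a : 'I_3) (z u : word) :
  equ (delta (u ++ a :: z))
      (fun w => delta (u ++ rcons z a) w +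
         \sum_(0 <= p < size z) \sum_(d <- enum 'I_3) ie a (nth ord0 z p) d * delta (u ++ set_nth ord0 z p d) w).
Proof.
elim: z u => [|b z IH] u.
  by apply: equ_ext => w; rewrite big_geq // addr0.
have IH' := IH (rcons u b).
apply: equ_trans (equ_lie u a b z) _.
apply: (@equ_extl _ (fun w => delta (rcons u b ++ a :: z) w + \sum_(d <- enum 'I_3) ie a b d * delta (u ++ d :: z) w)).
  by move=> w; rewrite cat_rcons.
apply: equ_trans (equ_add IH' (equ_refl (fun w => \sum_(d <- enum 'I_3) ie a b d * delta (u ++ d :: z) w))) _.
apply: equ_ext => w /=; rewrite big_nat_recl // /= !cat_rcons -addrA; congr (_ + _).
rewrite addrC; congr (_ + _).
by apply: eq_bigr => p _; apply: eq_bigr => d _; rewrite cat_rcons.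
Qed.

Lemma comm (a : 'I_3) (z : word) :
  equ (delta (a :: z)) (fun w => delta (rcons z a) w + corr a z w).
Proof. exact: (comm_gen a z [::]). Qed.

Lemma eps_aa (a d : 'I_3) : eps C a a d = 0.
Proof.
by case: a => [[|[|[|a]]] Ha] //; case: d => [[|[|[|d]]] Hd].
Qed.

Lemma eps_swap (a b d : 'I_3) : eps C a d b = - eps C a b d.
Proof.
case: a => [[|[|[|a]]] Ha] //; case: b => [[|[|[|b]]] Hb] //; case: d => [[|[|[|d]]] Hd] //=;
  rewrite /eps /= ?oppr0 ?opprK //.
Qed.

Lemma ie_aa a d : ie a a d = 0.
Proof. by rewrite /ie eps_aa mulr0. Qed.

Lemma ie_swap a b d : ie a d b = - ie a b d.
Proof. by rewrite /ie eps_swap mulrN. Qed.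

Lemma count_card s r : count_mem r s = #|[set i : 'I_(size s) | nth 0%N s i == r]|.
Proof.
rewrite -sum1_count (big_nth 0%N) big_mkord cardsE -sum1_card.
by apply: eq_bigl => i; rewrite inE.
Qed.

Definition sigp (s : seq nat) (p : 'I_(size s)) : 'I_(size s) :=
  odflt p [pick q | (q != p) && (nth 0%N s q == nth 0%N s p)].

Lemma sig_one s (p : 'I_(size s)) : count_mem (nth 0%N s p) s = 1%N -> sigp p = p.
Proof.
rewrite /sigp; case: pickP => [q /andP[Hqp Hq] | _] //= Hc.
have := cardsD1 p [set i : 'I_(size s) | nth 0%N s i == nth 0%N s p].
rewrite -count_card Hc inE eqxx /= => /eqP; rewrite eqSS eq_sym => /eqP/cards0_eq HA.
have : q \in set0 by rewrite -HA !inE Hqp.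
by rewrite inE.
Qed.

Lemma sig_eq s (p q : 'I_(size s)) : q != p -> nth 0%N s q = nth 0%N s p ->
  (forall i : 'I_(size s), i != p -> nth 0%N s i = nth 0%N s p -> i = q) -> sigp p = q.
Proof.
move=> Hqp Hq Hu; rewrite /sigp; case: pickP => [q' /andP[H1 /eqP H2] | H] /=.
  exact: Hu.
by move: (H q); rewrite Hqp Hq eqxx.
Qed.

Lemma sig_two s (p : 'I_(size s)) : count_mem (nth 0%N s p) s = 2%N ->
  [/\ sigp p != p, nth 0%N s (sigp p) = nth 0%N s p, sigp (sigp p) = p &
      forall i : 'I_(size s), nth 0%N s i = nth 0%N s p -> i = p \/ i = sigp p].
Proof.
move=> Hc.
set A := [set i : 'I_(size s) | nth 0%N s i == nth 0%N s p].
have : #|A :\ p| == 1%N.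
  by have := cardsD1 p A; rewrite -count_card Hc inE eqxx => -[->].
case/cards1P => q Hq.
have HqA : q \in A :\ p by rewrite Hq set11.
move: (HqA); rewrite !inE => /andP[Hqp /eqP Hsq].
have Hu : forall i, i != p -> nth 0%N s i = nth 0%N s p -> i = q.
  move=> i Hip Hsi; have : i \in A :\ p by rewrite !inE Hip Hsi eqxx.
  by rewrite Hq inE => /eqP.
have Hsp : sigp p = q by apply: sig_eq.
rewrite Hsp; split => //.
- apply: sig_eq; first by rewrite eq_sym.
    by rewrite Hsq.
  move=> i Hiq; rewrite Hsq => Hsi.
  by case: (eqVneq i p) => // Hip; case/eqP: Hiq; apply: Hu.
- move=> i Hsi; case: (eqVneq i p) => [->|Hip]; first by left.
  by right; apply: Hu.
Qed.


Definition fv (L : seq nat) (f : seq 'I_3) (t : nat) := nth ord0 f (index t L).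

Definition upd n (f : n.-tuple 'I_3) (i : nat) (d : 'I_3) : n.-tuple 'I_3 :=
  insubd f (set_nth ord0 f i d).

Lemma nth_upd n (f : n.-tuple 'I_3) i d k : (i < n)%N ->
  nth ord0 (upd f i d) k = if k == i then d else nth ord0 f k.
Proof.
move=> Hi; rewrite /upd val_insubd size_set_nth size_tuple (maxn_idPr Hi) eqxx.
by rewrite nth_set_nth.
Qed.

Definition wfw (v : seq nat) := all (fun t => count_mem t v == 2%N) v.

Lemma wfw_cnt x s (p : 'I_(size s)) : wfw (x :: s) ->
  if nth 0%N s p == x then count_mem x s = 1%N else count_mem (nth 0%N s p) s = 2%N.
Proof.
move=> /allP Hwf; case: eqP => [E|E].
  by move: (Hwf x (mem_head _ _)) => /= /eqP; rewrite eqxx => -[].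
have Hp : nth 0%N s p \in x :: s by rewrite inE mem_nth ?orbT.
move: (Hwf _ Hp) => /= /eqP; case: eqP => [E'|_] //.
by case: E.
Qed.

Lemma corr0 x s w : wfw (x :: s) ->
  \sum_(f : (size (undup (x :: s))).-tuple 'I_3)
     corr (fv (undup (x :: s)) f x) (col (undup (x :: s)) f s) w = 0.
Proof.
move=> Hwf; set L := undup (x :: s); set n := size L.
have UL : uniq L := undup_uniq _.
have HsL : {subset s <= L} by move=> t Ht; rewrite mem_undup inE Ht orbT.
have HxL : x \in L by rewrite mem_undup mem_head.
pose G (p : 'I_(size s)) := \sum_(f : n.-tuple 'I_3) \sum_(d : 'I_3)
   ie (fv L f x) (fv L f (nth 0%N s p)) d * delta (set_nth ord0 (col L f s) p d) w.
have -> : \sum_(f : n.-tuple 'I_3) corr (fv L f x) (col L f s) w = \sum_(p < size s) G p.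
  rewrite /G exchange_big /=; apply: eq_bigr => f _.
  rewrite /corr {1}/col size_map big_mkord; apply: eq_bigr => p _.
  rewrite big_enum /=; apply: eq_bigr => d _.
  by rewrite {1}/col (nth_map 0%N).
have Hinv : forall p : 'I_(size s), sigp (sigp p) = p.
  move=> p; have := wfw_cnt p Hwf; case: eqP => [E|E] Hc.
    by rewrite !sig_one // ?sig_one // E.
  by case: (sig_two Hc).
have Hneg : forall p : 'I_(size s), G (sigp p) = - G p.
  move=> p; have := wfw_cnt p Hwf; case: eqP => [E|E] Hc.
    have Hs : sigp p = p by rewrite sig_one // E.
    have G0 : G p = 0.
      rewrite /G big1 // => f _; rewrite big1 // => d _.
      by rewrite E ie_aa mul0r.
    by rewrite Hs G0 oppr0.
  have [Hq1 Hq2 Hq3 Hq4] := sig_two Hc.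
  set q := sigp p in Hq1 Hq2 Hq3 Hq4 *; set r := nth 0%N s p in E Hc Hq2 Hq4 *.
  have HrL : r \in L by apply: HsL; rewrite mem_nth.
  set ir := index r L.
  have Hir : (ir < n)%N by rewrite index_mem.
  have Hxr : index x L != ir.
    apply/eqP => Exr; have : nth 0%N L (index x L) = nth 0%N L ir by rewrite Exr.
    by rewrite !nth_index // => Ex; case: E.
  have fv_upd : forall (f : n.-tuple 'I_3) d t, fv L (upd f ir d) t = if index t L == ir then d else fv L f t.
    by move=> f d t; rewrite /fv nth_upd.
  pose Psi (fd : n.-tuple 'I_3 * 'I_3) := (upd fd.1 ir fd.2, fv L fd.1 r).
  have Psi_inv : forall fd, Psi (Psi fd) = fd.
    move=> [f d]; rewrite /Psi /= fv_upd eqxx; congr (_, _).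
    apply: val_inj; apply: (@eq_from_nth _ ord0); first by rewrite !size_tuple.
    move=> k _; rewrite !nth_upd //; case: eqP => // ->.
    by rewrite /fv.
  rewrite /G Hq2 !pair_big /= (reindex_inj (can_inj Psi_inv)) /= -sumrN.
  apply: eq_bigr => [[f d]] _ /=.
  rewrite !fv_upd (negbTE Hxr) eqxx ie_swap mulNr; congr (- (_ * _)).
  congr (delta _ w).
  apply: (@eq_from_nth _ ord0).
    by rewrite /col !size_set_nth !size_map (maxn_idPr (ltn_ord q)) (maxn_idPr (ltn_ord p)).
  move=> i; rewrite {1}/col size_set_nth size_map (maxn_idPr (ltn_ord q)) => Hi.
  rewrite !nth_set_nth /=.
  case: (eqVneq i q) => [->|Hiq].
    by rewrite ifN // /col (nth_map 0%N) // Hq2.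
  case: (eqVneq i p) => [->|Hip].
    by rewrite /col (nth_map 0%N) // nth_upd // eqxx.
  have Hsi : nth 0%N s i != r.
    apply/eqP => Esi; case: (Hq4 (Ordinal Hi) Esi) => /(congr1 val) /= Ei.
      by move: Hip; rewrite Ei eqxx.
    by move: Hiq; rewrite Ei eqxx.
  rewrite /col !(nth_map 0%N) // nth_upd //.
  case: eqP => // Eir; case/eqP: Hsi.
  have : nth 0%N L (index (nth 0%N s i) L) = nth 0%N L ir by rewrite Eir.
  by rewrite !nth_index // HsL // mem_nth.
have HS : \sum_(p < size s) G p = - \sum_(p < size s) G p.
  rewrite {1}(reindex_inj (can_inj Hinv)) /= -sumrN; apply: eq_bigr => p _; exact: Hneg.
have : (\sum_(p < size s) G p) *+ 2 == 0 by rewrite mulr2n {1}HS addNr.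
by rewrite mulrn_eq0 /= => /eqP.
Qed.


Lemma rot1 x s : wfw (x :: s) -> equ (Wf (x :: s)) (Wf (rcons s x)).
Proof.
move=> Hwf; set L := undup (x :: s).
have UL : uniq L := undup_uniq _.
apply: (@equ_extl _ (fun w => \sum_(f : (size L).-tuple 'I_3) delta (fv L f x :: col L f s) w)).
  by apply: (WfE UL) => t; rewrite mem_undup.
apply: (@equ_extr _ _ (fun w => \sum_(f : (size L).-tuple 'I_3)
     (delta (rcons (col L f s) (fv L f x)) w + corr (fv L f x) (col L f s) w))).
  move=> w; rewrite big_split /= corr0 // addr0.
  rewrite (WfE UL); last by move=> t; rewrite mem_rcons mem_undup.
  by apply: eq_bigr => f _; rewrite /col map_rcons.
by apply: equ_sum => f; apply: comm.
Qed.

Lemma wfw_perm v v' : perm_eq v v' -> wfw v = wfw v'.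
Proof.
move=> H; rewrite /wfw (perm_all _ H); apply: eq_all => t.
by rewrite (permP H).
Qed.

Lemma rotk u v : wfw (u ++ v) -> equ (Wf (u ++ v)) (Wf (v ++ u)).
Proof.
elim: u v => [|x u IH] v Hwf; first by rewrite cats0; apply: equ_refl.
apply: equ_trans (rot1 Hwf) _.
rewrite -cat_rcons rcons_cat.
apply: IH.
have Hp : perm_eq (rcons (u ++ v) x) (x :: u ++ v) by rewrite perm_rcons perm_refl.
by rewrite -rcons_cat (wfw_perm Hp).
Qed.


Implicit Types (p q : {poly C}) (g h : fn) (w : word).
Definition polyop (p : {poly C}) (g : fn) : fn :=
  fun w => \sum_(j < size p) p`_j * cLpow j g w.

Lemma polyopE N p g w : (size p <= N)%N ->
  polyop p g w = \sum_(j < N) p`_j * cLpow j g w.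
Proof.
move=> HN; rewrite /polyop (big_ord_widen N (fun j => p`_j * cLpow j g w)) //.
rewrite big_mkcond; apply: eq_bigr => i _; case: ltnP => // Hi.
by rewrite nth_default // mul0r.
Qed.

Lemma polyop0 g w : polyop 0 g w = 0.
Proof. by rewrite /polyop size_poly0 big_ord0. Qed.

Lemma polyopD p q g w : polyop (p + q) g w = polyop p g w + polyop q g w.
Proof.
rewrite !(@polyopE (maxn (size p) (size q))) ?leq_maxl ?leq_maxr ?size_add //.
by rewrite -big_split; apply: eq_bigr => j _; rewrite coefD mulrDl.
Qed.

Lemma polyopCM c p g w : polyop (c%:P * p) g w = c * polyop p g w.
Proof.
rewrite !(@polyopE (size p)) //; last by rewrite mul_polyC size_scale_leq.
by rewrite mulr_sumr; apply: eq_bigr => j _; rewrite coefCM mulrA.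
Qed.

Lemma polyopC c g w : polyop c%:P g w = c * g w.
Proof.
rewrite (@polyopE 1) ?size_polyC ?leq_b1 //.
by rewrite big_ord1 coefC.
Qed.

Lemma polyop_ext p g h : g =1 h -> polyop p g =1 polyop p h.
Proof. by move=> E w; apply: eq_bigr => j _; rewrite (cLpow_ext j E). Qed.

Lemma polyop_sumf p (I : Type) (s : seq I) (F : I -> fn) w :
  polyop p (fun w => \sum_(i <- s) F i w) w = \sum_(i <- s) polyop p (F i) w.
Proof.
rewrite /polyop exchange_big /=; apply: eq_bigr => j _.
by rewrite cLpow_sum mulr_sumr.
Qed.

Lemma polyop_scale p k g w : polyop p (fun w => k * g w) w = k * polyop p g w.
Proof.
rewrite /polyop mulr_sumr; apply: eq_bigr => j _.
by rewrite cLpow_scale mulrCA.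
Qed.

Lemma polyop_add p g h w : polyop p (fun w => g w + h w) w = polyop p g w + polyop p h w.
Proof.
rewrite /polyop -big_split; apply: eq_bigr => j _.
by rewrite cLpow_add mulrDr.
Qed.

Lemma polyop_sub p g h w : polyop p (fun w => g w - h w) w = polyop p g w - polyop p h w.
Proof.
rewrite /polyop -sumrB; apply: eq_bigr => j _.
by rewrite cLpow_sub mulrBr.
Qed.

Lemma polyop_cL p g : polyop p (cL g) =1 cL (polyop p g).
Proof.
move=> w; rewrite /polyop cL_sum; apply: eq_bigr => j _.
by rewrite cL_scale /cLpow -iterSr.
Qed.

Lemma polyopMX p g : polyop (p * 'X) g =1 polyop p (cL g).
Proof.
move=> w; rewrite (@polyopE (size p).+1); last first.
  apply: leq_trans (size_polyMleq _ _) _; rewrite size_polyX addn2 /=.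
  by [].
rewrite big_ord_recl coefMX /= mul0r add0r /polyop; apply: eq_bigr => j _.
by rewrite coefMX /= /cLpow -iterSr.
Qed.

Lemma equ_polyop p g h : equ g h -> equ (polyop p g) (polyop p h).
Proof.
move=> H; apply: equ_sum => j; apply: equ_scale; exact: equ_cLpow.
Qed.

Lemma polyopM p q g : polyop (p * q) g =1 polyop p (polyop q g).
Proof.
elim/poly_ind: p q g => [|p c IH] q g w.
  by rewrite mul0r !polyop0.
rewrite mulrDl -mulrA polyopD polyopCM IH polyopD polyopC polyopMX.
congr (_ + _).
apply: polyop_ext => w'.
by rewrite mulrC polyopMX polyop_cL.
Qed.

Lemma polyopXn k g : polyop ('X^k) g =1 cLpow k g.
Proof.
elim: k g => [|k IH] g w.
  by rewrite expr0 polyopC mul1r.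
by rewrite exprSr polyopMX IH /cLpow iterSr.
Qed.

Lemma polyop_sum (I : Type) (s : seq I) (P : I -> {poly C}) g w :
  polyop (\sum_(i <- s) P i) g w = \sum_(i <- s) polyop (P i) g w.
Proof.
elim: s => [|i s IH]; first by rewrite !big_nil polyop0.
by rewrite !big_cons polyopD IH.
Qed.

Lemma fa_coef_poly p : fa_coef (fa_poly p) =1 polyop p (delta [::]).
Proof.
move=> w; rewrite /fa_poly fa_coef_flatten.
have -> : iota 0 (size p) = index_iota 0 (size p) by rewrite /index_iota subn0.
rewrite big_mkord; apply: eq_bigr => j _.
rewrite fa_coef_scale; congr (_ * _).
elim: (nat_of_ord j) w => [|k IH] w /=.
  by rewrite fa_coefE big_seq1 mul1r.
by rewrite fa_coef_cas; apply: cL_ext.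
Qed.


Lemma tagLR a b : (tagL a == tagR b) = false.
Proof. apply/eqP; rewrite /tagL /tagR; lia. Qed.

Lemma tagRL a b : (tagR a == tagL b) = false.
Proof. apply/eqP; rewrite /tagL /tagR; lia. Qed.

Lemma tagL_inj : injective tagL.
Proof. move=> a b; rewrite /tagL; lia. Qed.

Lemma tagR_inj : injective tagR.
Proof. move=> a b; rewrite /tagR; lia. Qed.

Fixpoint xsA (j : nat) : seq nat :=
  if j is j'.+1 then rcons (map tagL (xsA j')) 1%N else [::].
Fixpoint ysB (k : nat) : seq nat :=
  if k is k'.+1 then rcons (map tagL (ysB k')) 1%N else [::].

Lemma doubles_cat X Y : doubles (X ++ Y) = doubles X ++ doubles Y.
Proof. by elim: X => [|x X IH] //=; rewrite IH. Qed.

Lemma powS_arch j : powS C arch j = [:: (1 : C, (doubles (xsA j), [::]))].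
Proof.
elim: j => [|j IH] //=; rewrite IH /crossC /= mulr1 /cross /= -cats1 doubles_cat /=.
by rewrite map_doubles.
Qed.

Lemma powS_bridge k : powS C bridge k = [:: (1 : C, (ysB k, rev (ysB k)))].
Proof.
elim: k => [|k IH] //=; rewrite IH /crossC /= mulr1 /cross /= rev_rcons map_rev.
by rewrite cats1.
Qed.

Lemma uniq_xsA j : uniq (xsA j).
Proof.
elim: j => [|j IH] //=; rewrite rcons_uniq map_inj_uniq ?IH ?andbT //; last exact: tagL_inj.
by apply/mapP => -[x _]; rewrite /tagL; lia.
Qed.

Lemma uniq_ysB k : uniq (ysB k).
Proof.
elim: k => [|k IH] //=; rewrite rcons_uniq map_inj_uniq ?IH ?andbT //; last exact: tagL_inj.
by apply/mapP => -[x _]; rewrite /tagL; lia.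
Qed.

Lemma size_xsA j : size (xsA j) = j.
Proof. by elim: j => [|j IH] //=; rewrite size_rcons size_map IH. Qed.

Lemma size_ysB k : size (ysB k) = k.
Proof. by elim: k => [|k IH] //=; rewrite size_rcons size_map IH. Qed.

Definition Qs (j k : nat) : share := cross (doubles (xsA j), [::]) (ysB k, rev (ysB k)).

Lemma sum_repS (A : {poly {poly C}}) (h : C * share -> C) :
  \sum_(a <- repS A) h a = \sum_(k < size A) \sum_(j < size A`_k) h (A`_k`_j, Qs j k).
Proof.
rewrite /repS big_flatten /= big_map.
have -> : iota 0 (size A) = index_iota 0 (size A) by rewrite /index_iota subn0.
rewrite big_mkord; apply: eq_bigr => k _.
rewrite big_flatten /= big_map.
have -> : iota 0 (size A`_k) = index_iota 0 (size A`_k) by rewrite /index_iota subn0.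
rewrite big_mkord; apply: eq_bigr => j _.
by rewrite powS_arch powS_bridge /crossC /= big_seq1 /= !mulr1.
Qed.

Definition Pw (F G : Comb C) : fn := fun w =>
  \sum_(a <- F) \sum_(b <- G) a.1 * b.1 * Wf (joinw a.2 b.2) w.

Lemma fa_coef_pair F G : fa_coef (pair_w F G) =1 Pw F G.
Proof.
move=> w; rewrite /pair_w /Pw fa_coefE big_flatten /= big_allpairs_dep.
apply: eq_bigr => a _; apply: eq_bigr => b _.
by rewrite -fa_coefE fa_coef_scale fa_coef_wt.
Qed.


Lemma count_map_inj (f : nat -> nat) x s : injective f -> count_mem (f x) (map f s) = count_mem x s.
Proof. by move=> Hf; rewrite count_map; apply: eq_count => y /=; rewrite inj_eq. Qed.

Lemma count_LR x s : count_mem (tagL x) (map tagR s) = 0%N.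
Proof. by elim: s => //= y s ->; rewrite tagRL. Qed.

Lemma count_RL x s : count_mem (tagR x) (map tagL s) = 0%N.
Proof. by elim: s => //= y s ->; rewrite tagLR. Qed.

Lemma wfw_map f a : injective f -> wfw (map f a) = wfw a.
Proof. by move=> Hf; rewrite /wfw all_map; apply: eq_all => t /=; rewrite count_map_inj. Qed.

Lemma wfw_LR a b : wfw a -> wfw b -> wfw (map tagL a ++ map tagR b).
Proof.
move=> /allP Ha /allP Hb; apply/allP => t; rewrite mem_cat => /orP[] /mapP[x Hx ->].
  by rewrite count_cat count_map_inj ?count_LR ?addn0 ?Ha //; exact: tagL_inj.
by rewrite count_cat count_map_inj ?count_RL ?Hb //; exact: tagR_inj.
Qed.

Lemma wfw_join P Q : wfw (P.1 ++ P.2) -> wfw (Q.1 ++ Q.2) -> wfw (joinw P Q).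
Proof.
move=> HP HQ.
have Hp : perm_eq (joinw P Q) (map tagL (P.1 ++ P.2) ++ map tagR (Q.1 ++ Q.2)).
  by rewrite /joinw !map_cat -!catA perm_cat2l perm_catCA perm_refl.
by rewrite (wfw_perm Hp) wfw_LR.
Qed.

Lemma wfw_doubles X : uniq X -> wfw (doubles X).
Proof.
move=> UX; apply/allP => t; rewrite mem_doubles => Ht.
by rewrite count_doubles count_uniq_mem // Ht.
Qed.

Lemma wfw_YY Y : uniq Y -> wfw (Y ++ rev Y).
Proof.
move=> UY; apply/allP => t; rewrite mem_cat mem_rev orbb => Ht.
by rewrite count_cat count_rev count_uniq_mem // Ht.
Qed.

Lemma wf_Qs j k : wfw ((Qs j k).1 ++ (Qs j k).2).
Proof.
have Hp : perm_eq ((Qs j k).1 ++ (Qs j k).2)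
   (map tagL (doubles (xsA j)) ++ map tagR (ysB k ++ rev (ysB k))).
  by rewrite /Qs /cross /= cats0 map_cat catA perm_refl.
rewrite (wfw_perm Hp) wfw_LR //; first exact/wfw_doubles/uniq_xsA.
exact/wfw_YY/uniq_ysB.
Qed.

Lemma wf_Ushare Q : wfw (Q.1 ++ Q.2) -> wfw ((Ushare Q).1 ++ (Ushare Q).2).
Proof.
move=> HQ.
have Hp : perm_eq ((Ushare Q).1 ++ (Ushare Q).2) (map tagL [:: 0; 0]%N ++ map tagR (Q.1 ++ Q.2)).
  by apply/permP => a; rewrite /Ushare /tagL /= map_cat !count_cat /= double0; lia.
by rewrite (wfw_perm Hp) wfw_LR.
Qed.

Definition flip (n : nat) : nat := if odd n then n.-1 else n.+1.

Lemma flip_inj : injective flip.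
Proof. by move=> a b; rewrite /flip; do 2 case: ifP => ?; lia. Qed.

Lemma flipL s : map flip (map tagL s) = map tagR s.
Proof. by rewrite -map_comp; apply: eq_map => x /=; rewrite /flip /tagL /tagR odd_double. Qed.

Lemma flipR s : map flip (map tagR s) = map tagL s.
Proof. by rewrite -map_comp; apply: eq_map => x /=; rewrite /flip /tagL /tagR /= odd_double. Qed.

Lemma stepA P Q : wfw (P.1 ++ P.2) -> wfw (Q.1 ++ Q.2) ->
  equ (Wf (joinw P Q)) (Wf (joinw Q (P.2, P.1))).
Proof.
move=> HP HQ; have Hw := wfw_join HP HQ.
move: Hw; rewrite {1 2}/joinw => Hw.
apply: equ_trans (rotk Hw) _; apply: equ_ext => w.
rewrite -(Wf_map (in2W flip_inj)) /joinw !map_cat !flipL !flipR.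
by rewrite -!catA.
Qed.


Definition Hp (H : share) : share := (0%N :: map tagR H.1, map tagR H.2 ++ [:: 0%N]).

Definition g6 (n : nat) : nat := (if n %% 2 == 0 then n.*2.+2 else if n == 1 then 0 else n./2)%N.

Lemma stepU Q H : wfw (Q.1 ++ Q.2) -> wfw (H.1 ++ H.2) ->
  equ (Wf (joinw (Ushare Q) H)) (Wf (joinw Q (Hp H))).
Proof.
move=> HQ HH; have Hw := wfw_join (wf_Ushare HQ) HH.
have Hj : joinw (Ushare Q) H = 0%N :: (map tagL (map tagR Q.1 ++ [:: 0%N]) ++ map tagR H.1 ++
             map tagL (map tagR Q.2) ++ map tagR H.2).
  by rewrite /joinw /Ushare /= /tagL double0.
rewrite Hj in Hw *.
apply: equ_trans (rot1 Hw) _; apply: equ_ext => w.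
have P6 : forall x, x \in joinw Q (Hp H) -> (x %% 2 = 0 \/ x = 1 \/ x %% 4 = 3)%N.
  have : all (fun x => (x %% 2 == 0) || (x == 1) || (x %% 4 == 3))%N (joinw Q (Hp H)).
    rewrite /joinw /Hp /= !all_cat !all_map /= !all_cat !all_map /= ?all_cat ?all_map /=.
    by repeat (apply/andP; split); try (apply/allP => y _ /=; rewrite /tagL /tagR; lia).
  move/allP => Hall x /Hall; lia.
have Hinj : {in joinw Q (Hp H) &, injective g6}.
  move=> x y /P6 Hx /P6 Hy; rewrite /g6.
  by do ! case: eqP => ?; lia.
rewrite -(Wf_map Hinj); congr (Wf _ w).
have e1 : forall s, map g6 (map tagL s) = map tagL (map tagR s).
  move=> s; rewrite -!map_comp; apply: eq_map => y /=; rewrite /g6 /tagL /tagR.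
  case: eqP => ?; lia.
have e2 : forall s, map g6 (map tagR (map tagR s)) = map tagR s.
  move=> s; rewrite -!map_comp; apply: eq_map => y /=; rewrite /g6 /tagL /tagR.
  by do ! case: eqP => ?; lia.
rewrite /joinw /Hp /= !map_cat /= !map_cat !e1 !e2 /=.
have -> : g6 (tagR 0) = 0%N by [].
by rewrite -!cats1 -!catA /= /tagL double0.
Qed.

Definition B (k : nat) (H : share) : seq nat :=
  map tagL (map tagR (ysB k)) ++ (map tagR H.1 ++
    (map tagL (map tagR (rev (ysB k)) ++ map tagL [::]) ++ map tagR H.2)).

Lemma Wf_QsH j k H : Wf (joinw (Qs j k) H) =1 cLpow j (Wf (B k H)).
Proof.
have -> : joinw (Qs j k) H = doubles (map tagL (map tagL (xsA j))) ++ B k H.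
  by rewrite /joinw /Qs /cross /B /= map_cat -catA !map_doubles.
move=> w; rewrite Wf_doubles ?size_map ?size_xsA //.
  by rewrite !map_inj_uniq ?uniq_xsA //; exact: tagL_inj.
apply/allP => x /mapP[y' /mapP[y _ ->] ->]; rewrite /B !mem_cat /=.
apply/negP; case/or4P.
- by move/mapP => [z' /mapP[z _ ->]]; rewrite /tagL /tagR; lia.
- by move/mapP => [z _]; rewrite /tagL /tagR; lia.
- by rewrite cats0 => /mapP[z' /mapP[z _ ->]]; rewrite /tagL /tagR; lia.
- by move/mapP => [z _]; rewrite /tagL /tagR; lia.
Qed.


Lemma B_odd k H x : x \in B k H -> odd x -> x./2 \in H.1 ++ H.2.
Proof.
move=> Hx Ho; move: Hx; rewrite /B !mem_cat => /or4P[].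
- by move/mapP => [y _ Ey]; move: Ho; rewrite Ey /tagL odd_double.
- move/mapP => [y Hy ->]; have -> : (tagR y)./2 = y by rewrite /tagR; lia.
  by rewrite Hy.
- by move/mapP => [y _ Ey]; move: Ho; rewrite Ey /tagL odd_double.
- move/mapP => [y Hy ->]; have -> : (tagR y)./2 = y by rewrite /tagR; lia.
  by rewrite Hy orbT.
Qed.

Lemma WfB_map k H (g : nat -> nat) : {in H.1 ++ H.2 &, injective g} ->
  Wf (B k (map g H.1, map g H.2)) =1 Wf (B k H).
Proof.
move=> Hinj.
pose g7 n := if odd n then tagR (g n./2) else n.
have eL : forall s, map g7 (map tagL s) = map tagL s.
  by move=> s; rewrite -map_comp; apply: eq_map => y /=; rewrite /g7 /tagL odd_double.
have eR : forall s, map g7 (map tagR s) = map tagR (map g s).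
  move=> s; rewrite -!map_comp; apply: eq_map => y /=; rewrite /g7 /tagR /= odd_double /=.
  by congr (_.*2.+1); congr g; lia.
have -> : B k (map g H.1, map g H.2) = map g7 (B k H).
  by rewrite /B /= !map_cat !eL !eR.
apply: Wf_map => x y Hx Hy; rewrite /g7.
case: ifP => ox; case: ifP => oy.
- move/tagR_inj => /Hinj E.
  have := E (B_odd Hx ox) (B_odd Hy oy); lia.
- by rewrite /tagR => E; move: oy; rewrite -E /= odd_double.
- by rewrite /tagR => E; move: ox; rewrite E /= odd_double.
- by [].
Qed.

Lemma WfB_plus k H z : z \notin H.1 ++ H.2 ->
  Wf (B k (z :: H.1, H.2 ++ [:: z])) =1 Wf (B k (Hp H)).
Proof.
move=> Hz w.
pose g8 n := if n == z then 0%N else tagR n.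
have Hinj : injective g8.
  by move=> a b; rewrite /g8 /tagR; do 2 case: eqP => ?; lia.
have -> : Hp H = (map g8 (z :: H.1), map g8 (H.2 ++ [:: z])).
  rewrite /Hp /= /g8 eqxx map_cat /= eqxx; congr (_ :: _, _ ++ _).
    apply/eq_in_map => y Hy /=; case: eqP => // E; case/negP: Hz.
    by rewrite mem_cat -E Hy.
  apply/eq_in_map => y Hy /=; case: eqP => // E; case/negP: Hz.
  by rewrite mem_cat -E Hy orbT.
by rewrite (@WfB_map k (z :: H.1, H.2 ++ [:: z]) g8 (in2W Hinj)).
Qed.

Lemma wfw_YDY Y D : uniq Y -> wfw D -> all (fun y => y \notin D) Y -> wfw (rev Y ++ D ++ Y).
Proof.
move=> UY /allP HD /allP HYD; apply/allP => t Ht; rewrite !count_cat count_rev.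
case: (boolP (t \in Y)) => tY.
  have /count_memPn -> := HYD t tY.
  by rewrite count_uniq_mem // tY.
have /count_memPn -> := tY.
move: Ht; rewrite !mem_cat mem_rev (negbTE tY) /= orbF => tD.
by rewrite add0n addn0 HD.
Qed.

Lemma Wf_nil : Wf [::] =1 delta [::].
Proof. by move=> w; rewrite /Wf /cons_w /delta eq_sym. Qed.

Lemma Wf_nest Z : uniq Z -> equ (Wf (Z ++ rev Z)) (cLpow (size Z) (delta [::])).
Proof.
elim: Z => [|y Z IH] /=; first by move=> _; apply: equ_ext; exact: Wf_nil.
case/andP => HyZ UZ.
have HyS : y \notin Z ++ rev Z by rewrite mem_cat mem_rev orbb.
have Hw : wfw (y :: y :: (Z ++ rev Z)).
  apply/allP => t; rewrite !inE => Ht /=.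
  case: (eqVneq y t) => [<-|Hyt] /=.
    by rewrite (count_memPn HyS).
  move: Ht; rewrite eq_sym (negbTE Hyt) /= => Ht.
  by move/allP: (wfw_YY UZ) => /(_ t Ht).
rewrite rev_cons -cats1 catA cats1 -rcons_cons.
apply: equ_trans (equ_sym (rot1 Hw)) _.
apply: equ_extl (Wf_dd HyS) _.
exact: equ_cL (IH UZ).
Qed.


Definition PhiB (E : {poly {poly C}}) (H : share) : fn :=
  fun w => \sum_(k < size E) polyop E`_k (Wf (B k H)) w.

Lemma Pw_repS (E : {poly {poly C}}) H : Pw (repS E) [:: (1, H)] =1 PhiB E H.
Proof.
move=> w; rewrite /Pw sum_repS /PhiB; apply: eq_bigr => k _.
rewrite /polyop; apply: eq_bigr => j _.
by rewrite big_seq1 /= mulr1 Wf_QsH.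
Qed.

Lemma PhiB_plus E H z : z \notin H.1 ++ H.2 ->
  PhiB E (z :: H.1, H.2 ++ [:: z]) =1 PhiB E (Hp H).
Proof.
move=> Hz w; apply: eq_bigr => k _; apply: polyop_ext => w'.
exact: WfB_plus.
Qed.

Lemma u_neq0 n : u_ev C n != 0.
Proof. by rewrite /u_ev monic_neq0 // monicXsubC. Qed.

Lemma PhiB_step E n H : is_e n E -> wfw (H.1 ++ H.2) ->
  equ (PhiB E (Hp H)) (polyop (u_ev C n) (PhiB E H)).
Proof.
case=> _ _ Heq HH.
have h3 := equ_eqU (Heq H HH).
have h1 : equ (Pw (Uop (repS E)) [:: (1, H)]) (PhiB E (Hp H)).
  apply: (@equ_extl _ (fun w => \sum_(k < size E) \sum_(j < size E`_k)
                E`_k`_j * Wf (joinw (Ushare (Qs j k)) H) w)).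
    move=> w; rewrite /Pw /Uop big_map sum_repS; apply: eq_bigr => k _.
    by apply: eq_bigr => j _; rewrite big_seq1 /= mulr1.
  apply: (@equ_extr _ _ (fun w => \sum_(k < size E) \sum_(j < size E`_k)
                E`_k`_j * Wf (joinw (Qs j k) (Hp H)) w)).
    move=> w; rewrite /PhiB; apply: eq_bigr => k _; rewrite /polyop.
    by apply: eq_bigr => j _; rewrite Wf_QsH.
  apply: equ_sum => k; apply: equ_sum => j; apply: equ_scale.
  exact: stepU (wf_Qs j k) HH.
have h2 : Pw (repS ((u_ev C n)%:P * E)) [:: (1, H)] =1 polyop (u_ev C n) (PhiB E H).
  move=> w; rewrite Pw_repS /PhiB size_Cmul ?u_neq0 // polyop_sumf.
  by apply: eq_bigr => k _; rewrite coefCM polyopM.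
apply: equ_trans (equ_sym h1) _.
apply: equ_trans (equ_extl (fun w => esym (fa_coef_pair _ _ w)) h3) _.
apply: equ_ext => w; rewrite fa_coef_pair; exact: h2.
Qed.


Lemma equ_PhiB E H H' : (forall k, equ (Wf (B k H)) (Wf (B k H'))) -> equ (PhiB E H) (PhiB E H').
Proof. by move=> HB; apply: equ_sum => k; apply: equ_polyop. Qed.

Lemma PhiB_YD E n Y D : is_e n E -> uniq Y -> wfw D -> all (fun y => y \notin D) Y ->
  equ (PhiB E (rev Y, D ++ Y)) (polyop ((u_ev C n) ^+ size Y) (PhiB E ([::], D))).
Proof.
move=> He; elim/last_ind: Y => [|Y z IH] UY HD HYD.
  by apply: equ_ext => w; rewrite cats0 expr0 polyopC mul1r.
move: UY; rewrite rcons_uniq => /andP[HzY UY].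
move: HYD; rewrite all_rcons => /andP[HzD HYD].
have Hz : z \notin (rev Y, D ++ Y).1 ++ (rev Y, D ++ Y).2.
  by rewrite /= !mem_cat mem_rev negb_or HzY negb_or HzD HzY.
have HH : wfw ((rev Y, D ++ Y).1 ++ (rev Y, D ++ Y).2) by apply: wfw_YDY.
apply: (@equ_extl _ (PhiB E (z :: (rev Y, D ++ Y).1, (rev Y, D ++ Y).2 ++ [:: z]))).
  by move=> w; rewrite rev_rcons -cats1 catA.
apply: equ_extl (PhiB_plus E Hz) _.
apply: equ_trans (PhiB_step He HH) _.
apply: equ_trans (equ_polyop (u_ev C n) (IH UY HD HYD)) _.
by apply: equ_ext => w; rewrite size_rcons exprS polyopM.
Qed.

Lemma polyop_cLpow p j g : polyop p (cLpow j g) =1 cLpow j (polyop p g).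
Proof.
elim: j g => [|j IH] g w //=.
rewrite polyop_cL; apply: cL_ext; exact: IH.
Qed.

Lemma PhiB_D E X : uniq X ->
  equ (PhiB E ([::], doubles X)) (cLpow (size X) (PhiB E ([::], [::]))).
Proof.
move=> UX.
apply: (@equ_extr _ _ (fun w => \sum_(k < size E) polyop E`_k (cLpow (size X) (Wf (B k ([::], [::])))) w)).
  by move=> w; rewrite /PhiB cLpow_sum; apply: eq_bigr => k _; rewrite polyop_cLpow.
apply: equ_sum => k; apply: equ_polyop.
set S := map tagL (map tagR (ysB k)) ++ map tagL (map tagR (rev (ysB k)) ++ [::]).
have E1 : B k ([::], doubles X) = S ++ map tagR (doubles X).
  by rewrite /B /S /= catA.
have E2 : B k ([::], [::]) = S by rewrite /B /S /= cats0.
rewrite E1 E2.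
have Hw : wfw (S ++ map tagR (doubles X)).
  rewrite /S -map_cat; apply: wfw_LR; last exact: wfw_doubles.
  by rewrite cats0 -map_cat wfw_map ?wfw_YY ?uniq_ysB //; exact: tagR_inj.
apply: equ_trans (rotk Hw) _; apply: equ_ext => w.
rewrite map_doubles Wf_doubles ?size_map //.
  by rewrite map_inj_uniq //; exact: tagR_inj.
apply/allP => x /mapP[y _ ->]; rewrite /S !mem_cat; apply/negP; case/orP.
  by move/mapP => [z' /mapP[z _ ->]]; rewrite /tagL /tagR; lia.
by rewrite cats0 => /mapP[z' /mapP[z _ ->]]; rewrite /tagL /tagR; lia.
Qed.

Lemma PhiB_0 E : equ (PhiB E ([::], [::])) (polyop E.['X] (delta [::])).
Proof.
apply: (@equ_extr _ _ (fun w => \sum_(k < size E) polyop E`_k (cLpow k (delta [::])) w)).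
  move=> w; rewrite horner_coef polyop_sum; apply: eq_bigr => k _.
  by rewrite polyopM; apply: polyop_ext => w'; rewrite polyopXn.
apply: equ_sum => k; apply: equ_polyop.
set Z := map tagL (map tagR (ysB k)).
have -> : B k ([::], [::]) = Z ++ rev Z by rewrite /B /Z /= !cats0 !map_rev.
have -> : (k : nat) = size Z by rewrite /Z !size_map size_ysB.
apply: Wf_nest.
by rewrite /Z (map_inj_uniq tagL_inj) (map_inj_uniq tagR_inj) uniq_ysB.
Qed.


Lemma sumQ_PhiB (E : {poly {poly C}}) H w :
  \sum_(k < size E) \sum_(j < size E`_k) E`_k`_j * Wf (joinw (Qs j k) H) w = PhiB E H w.
Proof.
rewrite /PhiB; apply: eq_bigr => k _; rewrite /polyop.
by apply: eq_bigr => j _; rewrite Wf_QsH.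
Qed.

Lemma main (A E : {poly {poly C}}) (n : nat) :
  is_e n E ->
  eqU (pair_w (repS A) (repS E)) (fa_poly (A.[u_ev C n] * E.['X])).
Proof.
move=> He; apply: eqU_equ.
set u := u_ev C n; set G := polyop E.['X] (delta [::]).
apply: (equ_extl (fa_coef_pair _ _)).
apply: (equ_extr (fa_coef_poly _)).
apply: (@equ_extl _ (fun w => \sum_(k < size A) \sum_(j < size A`_k) A`_k`_j *
     \sum_(k' < size E) \sum_(j' < size E`_k') E`_k'`_j' * Wf (joinw (Qs j k) (Qs j' k')) w)).
  move=> w; rewrite /Pw sum_repS; apply: eq_bigr => k _; apply: eq_bigr => j _ /=.
  rewrite sum_repS mulr_sumr; apply: eq_bigr => k' _; rewrite mulr_sumr.
  by apply: eq_bigr => j' _ /=; rewrite mulrA.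
apply: (@equ_trans _ (fun w => \sum_(k < size A) \sum_(j < size A`_k) A`_k`_j *
     PhiB E ((Qs j k).2, (Qs j k).1) w)).
  apply: equ_sum => k; apply: equ_sum => j; apply: equ_scale.
  apply: (@equ_extr _ _ (fun w => \sum_(k' < size E) \sum_(j' < size E`_k') E`_k'`_j' *
       Wf (joinw (Qs j' k') ((Qs j k).2, (Qs j k).1)) w)).
    by move=> w; rewrite sumQ_PhiB.
  apply: equ_sum => k'; apply: equ_sum => j'; apply: equ_scale.
  exact: stepA (wf_Qs j k) (wf_Qs j' k').
apply: (@equ_trans _ (fun w => \sum_(k < size A) \sum_(j < size A`_k) A`_k`_j *
     polyop (u ^+ k) (cLpow j G) w)).
  apply: equ_sum => k; apply: equ_sum => j; apply: equ_scale.
  set Y := map tagR (ysB k); set X := map tagL (xsA j).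
  have -> : ((Qs j k).2, (Qs j k).1) = (rev Y, doubles X ++ Y).
    by rewrite /Qs /cross /= cats0 /Y /X map_rev map_doubles.
  have UY : uniq Y by rewrite /Y (map_inj_uniq tagR_inj) uniq_ysB.
  have UX : uniq X by rewrite /X (map_inj_uniq tagL_inj) uniq_xsA.
  have HYD : all (fun y => y \notin doubles X) Y.
    apply/allP => y /mapP[y' _ ->]; rewrite mem_doubles; apply/mapP => -[z _].
    by rewrite /tagL /tagR; lia.
  apply: equ_trans (PhiB_YD He UY (wfw_doubles UX) HYD) _.
  have -> : size Y = k by rewrite /Y size_map size_ysB.
  apply: equ_polyop.
  apply: equ_trans (PhiB_D E UX) _.
  have -> : size X = j by rewrite /X size_map size_xsA.
  apply: equ_cLpow; exact: PhiB_0.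
apply: equ_ext => w.
rewrite polyopM horner_coef polyop_sum; apply: eq_bigr => k _.
rewrite mulrC polyopM polyop_sumf; apply: eq_bigr => j _.
by rewrite polyop_scale.
Qed.

End Dev.

Unset Implicit Arguments.

Theorem lemma10 (C : numClosedFieldType) (A E : {poly {poly C}}) (n : nat) :
  is_e n E ->
  eqU (pair_w (repS A) (repS E))
      (fa_poly (A.[u_ev C n] * E.['X])).
Proof. exact: main. Qed.
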